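(* For all integers $r\ge 3$ and $n\ge 1$, $$\max\Bigl\{\alpha\bigl(C_{d,q}^{\boxtimes n}\bigr)\;:\; q,d\in\mathbb N,\ q\ge 2d,\ q/d<r\Bigr\}=\frac{1+r^n(r-2)}{r-1}.$$
   Context: For positive integers $q,d$ with $q\ge 2d$, the circular graph $C_{d,q}$ has vertex set $\mathbb Z_q$, two distinct vertices $x,y$ being adjacent iff $\min\{|x-y|,q-|x-y|\}<d$ (viewing $x,y$ as integers in $\{0,\dots,q-1\}$). For a graph $G=(V,E)$, the strong product power $G^{\boxtimes n}$ has vertex set $V^n$, two distinct vertices $(u_1,\dots,u_n),(v_1,\dots,v_n)$ being adjacent iff for every $i$ either $u_i=v_i$ or $u_iv_i\in E$. $\alpha(G)$ is the maximum size of an independent set (a set of pairwise non-adjacent vertices) of $G$. *)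

(* Defs.v *)
From mathcomp Require Import all_boot.
Set Implicit Arguments. Unset Strict Implicit. Unset Printing Implicit Defensive.

Definition circ_adj (q d : nat) : rel 'I_q :=
  fun x y => let k := maxn x y - minn x y in
             (x != y) && (minn k (q - k) < d).

Definition strong_pow (T : finType) (e : rel T) (n : nat) : rel {ffun 'I_n -> T} :=
  fun u v => (u != v) && [forall i, (u i == v i) || e (u i) (v i)].

Definition independent (T : finType) (e : rel T) (S : {set T}) : bool :=
  [forall x in S, forall y in S, ~~ e x y].

Definition alpha (T : finType) (e : rel T) : nat :=
  \max_(S : {set T} | independent e S) #|S|.

(* Main.v *)
Require Import Defs.
From mathcomp Require Import all_boot zify.
Set Implicit Arguments. Unset Strict Implicit. Unset Printing Implicit Defensive.
Fixpoint F (r n : nat) : nat := if n is m.+1 then r * F r m - 1 else 1.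
Fixpoint Rr (r n : nat) : nat := if n is m.+1 then r * Rr r m + 1 else 0.

Lemma F_pos r n : 2 <= r -> 0 < F r n.
Proof. move=> hr; elim: n => [|n IH] //=; nia. Qed.

Lemma F_mul r n : 2 <= r -> (r - 1) * F r n = 1 + r ^ n * (r - 2).
Proof.
move=> hr; elim: n => [|n IH] /=; first lia.
have := F_pos n hr; rewrite expnS; move: (r ^ n) IH => P IH Hp; nia.
Qed.

Lemma RF r n : 2 <= r -> Rr r n + F r n = r ^ n.
Proof.
move=> hr; elim: n => [|n IH] /=; first by [].
have := F_pos n hr; rewrite expnS; move: (r ^ n) IH => P IH Hp; nia.
Qed.

Lemma divmod_uniq N a b c : 0 < N -> b < N -> c = a * N + b -> c %/ N = a /\ c %% N = b.
Proof.
move=> HN Hb ->; rewrite divnMDl // modnMDl divn_small // modn_small //; lia.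
Qed.

Lemma allbad_false r m k : 3 <= r -> 0 < k -> k < F r m.+1 ->
  (forall i, i < m.+1 -> (k * r ^ i) %% F r m.+1 < F r m \/ F r m.+1 - F r m < (k * r ^ i) %% F r m.+1) -> False.
Proof.
move=> hr hk hkN Hbad.
set N := F r m.+1; set M := F r m.
have HM : 0 < M by apply: F_pos; lia.
have HNM : N = r * M - 1 by [].
have HN : 0 < N by rewrite /N; apply: F_pos; lia.
have P : forall j, j <= m.+1 -> exists E, E <= Rr r j /\ (k * r ^ j) %/ N = (r - 1) * E.
  elim=> [|j IH] Hj.
    exists 0; split => //. rewrite expn0 muln1 muln0 divn_small //.
  have [E [HE Hq]] := IH (ltnW Hj).
  have Hx := ltn_pmod (k * r ^ j) HN.
  have Hdiv := divn_eq (k * r ^ j) N.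
  move: (k * r ^ j %% N) Hx Hdiv (Hbad j Hj) => x Hx Hdiv Hb.
  rewrite Hq in Hdiv.
  have Hk1 : k * r ^ j.+1 = (k * r ^ j) * r by rewrite expnSr mulnA.
  case: Hb => Hb.
  - exists (r * E); split; first by rewrite /=; clear -HE hr; nia.
    have Hlt : x * r < N by clear -Hb HNM HM hr; nia.
    have Heq : k * r ^ j.+1 = (r - 1) * (r * E) * N + x * r by rewrite Hk1 Hdiv; clear; nia.
    by have [-> _] := divmod_uniq HN Hlt Heq.
  - exists (r * E + 1); split; first by rewrite /=; clear -HE hr; nia.
    have Hge : (r - 1) * N <= x * r by clear -Hb HNM HM hr Hx; nia.
    have Hlt : x * r - (r - 1) * N < N by clear -Hx hr HN Hge; nia.
    have Heq : k * r ^ j.+1 = (r - 1) * (r * E + 1) * N + (x * r - (r - 1) * N) by rewrite Hk1 Hdiv; clear -Hge hr; nia.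
    by have [-> _] := divmod_uniq HN Hlt Heq.
have [E [HE Hq]] := P m.+1 (leqnn _).
have Hx := ltn_pmod (k * r ^ m.+1) HN.
have Hdiv := divn_eq (k * r ^ m.+1) N.
rewrite Hq in Hdiv.
have HFm := F_mul m.+1 (ltnW hr). rewrite -/N in HFm.
have HR := RF m.+1 (ltnW hr). rewrite -/N in HR.
move: (k * r ^ m.+1 %% N) Hx Hdiv => x Hx Hdiv.
move: (r ^ m.+1) HFm HR Hdiv => P' HFm HR Hdiv.
have Hdiv' : k * P' = E + (r - 2) * E * P' + x.
  rewrite Hdiv; clear -HFm hr; nia.
have HEx : E + x < P' by lia.
have Hkp : 0 < k * P' by rewrite muln_gt0 hk; lia.
case: (leqP k ((r - 2) * E)) => Hk.
- have : k * P' <= (r - 2) * E * P' by rewrite leq_mul2r Hk orbT.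
  move=> H1; have E0 : E = 0 by clear -Hdiv' H1; lia.
  rewrite E0 muln0 mul0n in Hdiv' H1; clear -Hdiv' Hkp H1; lia.
- have : ((r - 2) * E + 1) * P' <= k * P' by rewrite leq_mul2r addn1 Hk orbT.
  rewrite mulnDl mul1n; clear -Hdiv' HEx; lia.
Qed.

Lemma alpha_ub (T : finType) (e : rel T) b :
  (forall S, independent e S -> #|S| <= b) -> alpha e <= b.
Proof. by move=> H; apply/bigmax_leqP => S; exact: H. Qed.

Lemma alpha_lb (T : finType) (e : rel T) (S : {set T}) : independent e S -> #|S| <= alpha e.
Proof. by move=> H; apply: (leq_bigmax_cond (F := fun S : {set T} => #|S|)). Qed.

Lemma indepP (T : finType) (e : rel T) (S : {set T}) :
  reflect (forall x y, x \in S -> y \in S -> ~~ e x y) (independent e S).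
Proof.
apply: (iffP forall_inP) => H x.
  by move=> y hx hy; exact: (forall_inP (H x hx) y hy).
by move=> hx; apply/forall_inP => y hy; exact: H.
Qed.

Lemma modq x j q : x < q -> j < q -> (x + q - j) %% q = if j <= x then x - j else x + q - j.
Proof.
move=> hx hj; case: ifP => h.
  by rewrite -addnBAC // modnDr modn_small //; lia.
by rewrite modn_small //; lia.
Qed.

Lemma ord_split n (i : 'I_n.+1) : i = ord_max \/ exists i' : 'I_n, i = widen_ord (leqnSn n) i'.
Proof.
case: (ltnP i n) => h.
  by right; exists (Ordinal h); apply: val_inj.
by left; apply: val_inj => /=; have := ltn_ord i; lia.
Qed.

Lemma forall_split n (P : 'I_n.+1 -> bool) :
  (forall i : 'I_n, P (widen_ord (leqnSn n) i)) -> P ord_max -> forall i, P i.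
Proof. by move=> H1 H2 i; case: (ord_split i) => [->|[i' ->]]. Qed.

Lemma count_win q d (x : 'I_q) : d <= q -> #|[set j : 'I_q | (x + q - j) %% q < d]| = d.
Proof.
move=> hdq.
have qpos : 0 < q by have := ltn_ord x; lia.
pose psi (t : 'I_q) : 'I_q := Ordinal (ltn_pmod (x + q - t) qpos).
have psiK : involutive psi.
  move=> t; apply: val_inj => /=.
  have hx := ltn_ord x; have ht := ltn_ord t.
  rewrite (modq hx ht); case: leqP => h2.
    have h1 : x - t < q by lia.
    rewrite (modq hx h1); case: ifP => h3; lia.
  have h1 : x + q - t < q by lia.
  rewrite (modq hx h1); case: ifP => h3; lia.
have -> : [set j : 'I_q | (x + q - j) %% q < d] = psi @: [set t : 'I_q | t < d].
  apply/setP => j; rewrite inE; apply/idP/imsetP.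
    move=> h; exists (psi j); [rewrite inE; exact h | exact: (esym (psiK j))].
  by move=> [t]; rewrite inE => ht ->; move: (congr1 val (psiK t)) => /= ->.
rewrite card_imset; last exact: (inv_inj psiK).
have -> : [set t : 'I_q | t < d] = widen_ord hdq @: [set: 'I_d].
  apply/setP => t; rewrite inE; apply/idP/imsetP.
    by move=> h; exists (Ordinal h) => //; apply: val_inj.
  by move=> [t' _ ->] /=.
rewrite card_imset ?cardsT ?card_ord //.
by move=> a b /(congr1 val) /= h; apply: val_inj.
Qed.

Lemma win_adj q d (j a b : 'I_q) : 2 * d <= q ->
  (a + q - j) %% q < d -> (b + q - j) %% q < d -> (a == b) || @circ_adj q d a b.
Proof.
move=> hq.
have ha := ltn_ord a; have hb := ltn_ord b; have hj := ltn_ord j.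
rewrite (modq ha hj) (modq hb hj) /circ_adj.
case: (eqVneq a b) => //= hab.
have hab' : val a != val b by [].
move: hab'; case: ifP => h1; case: ifP => h2 => h3 h4 h5; apply/eqP; lia.
Qed.

Lemma upper_step q d n (S : {set {ffun 'I_n.+1 -> 'I_q}}) : 0 < d -> 2 * d <= q ->
  independent (@strong_pow _ (@circ_adj q d) n.+1) S ->
  d * #|S| <= q * alpha (@strong_pow _ (@circ_adj q d) n).
Proof.
move=> hd hq /indepP HS.
pose w (j x : 'I_q) := (x + q - j) %% q < d.
pose rest (u : {ffun 'I_n.+1 -> 'I_q}) : {ffun 'I_n -> 'I_q} :=
  [ffun i => u (widen_ord (leqnSn n) i)].
pose Sj j := [set u in S | w j (u ord_max)].
have Hsum : \sum_(j : 'I_q) #|Sj j| = d * #|S|.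
  transitivity (\sum_(j : 'I_q) \sum_(u in S) (w j (u ord_max) : nat)).
    apply: eq_bigr => j _.
    rewrite -sum1_card big_mkcond [RHS]big_mkcond /=; apply: eq_bigr => u _.
    by rewrite inE; case: (u \in S); case: (w j _).
  rewrite exchange_big /=.
  transitivity (\sum_(u in S) d).
    apply: eq_bigr => u _.
    have hdq : d <= q by lia.
    rewrite -(count_win (u ord_max) hdq).
    rewrite -sum1_card [RHS]big_mkcond /=; apply: eq_bigr => j _.
    by rewrite inE /w; case: (_ < d).
  by rewrite sum_nat_const mulnC.
have Hle : forall j, #|Sj j| <= alpha (@strong_pow _ (@circ_adj q d) n).
  move=> j.
  have Hinj : {in Sj j &, injective rest}.
    move=> u v; rewrite !inE => /andP [hu wu] /andP [hv wv] Huv.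
    case: (eqVneq u v) => // Hne; exfalso.
    move: (HS u v hu hv); apply/negP/negPn; rewrite /strong_pow Hne /=.
    apply/forallP; apply: forall_split.
      by move=> i; have := congr1 (fun f : {ffun 'I_n -> 'I_q} => f i) Huv; rewrite !ffunE => ->; rewrite eqxx.
    exact: win_adj hq wu wv.
  rewrite -(card_in_imset Hinj); apply: alpha_lb; apply/indepP.
  move=> x y /imsetP [u hu ->] /imsetP [v hv ->].
  move: hu hv; rewrite !inE => /andP [hu wu] /andP [hv wv].
  apply/negP; rewrite /strong_pow => /andP [Hne /forallP Hall].
  move: (HS u v hu hv); apply/negP/negPn; rewrite /strong_pow.
  have -> : u != v by apply: contraNneq Hne => ->.
  rewrite /=; apply/forallP; apply: forall_split.
    by move=> i; have := Hall i; rewrite !ffunE.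
  exact: win_adj hq wu wv.
rewrite -Hsum.
apply: (@leq_trans (\sum_(j : 'I_q) alpha (@strong_pow _ (@circ_adj q d) n))).
  by apply: leq_sum => j _; exact: Hle.
by rewrite sum_nat_const card_ord.
Qed.

Lemma upper_all r q d n : 3 <= r -> 0 < d -> 2 * d <= q -> q < r * d ->
  alpha (@strong_pow _ (@circ_adj q d) n) <= F r n.
Proof.
move=> hr hd hq hqr; elim: n => [|n IH].
  apply: alpha_ub => S _; apply: leq_trans (max_card S) _.
  by rewrite card_ffun !card_ord expn0.
apply: alpha_ub => S HS.
have h := upper_step hd hq HS.
have hF := F_pos n (ltnW hr).
have h1 : d * #|S| <= q * F r n by apply: leq_trans h _; rewrite leq_mul2l IH orbT.
have h2 : q * F r n < d * (r * F r n).
  by rewrite mulnA ltn_pmul2r // mulnC.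
have h3 : #|S| < r * F r n by rewrite -(ltn_pmul2l hd); apply: leq_ltn_trans h1 h2.
rewrite /=; move: h3; case: (r * F r n) => // k; rewrite subn1 /= ltnS; apply.
Qed.

Lemma exists_good r m j : 3 <= r -> 0 < j -> j < F r m.+1 ->
  exists i, i < m.+1 /\ F r m <= (j * r ^ i) %% F r m.+1 <= F r m.+1 - F r m.
Proof.
move=> hr hj hjN.
pose bad i := ((j * r ^ i) %% F r m.+1 < F r m) || (F r m.+1 - F r m < (j * r ^ i) %% F r m.+1).
case: (boolP (all bad (iota 0 m.+1))) => H.
  exfalso; apply: (allbad_false hr hj hjN) => i hi.
  have := allP H i; rewrite mem_iota /= add0n => /(_ hi) /orP.
  by [].
move: H; rewrite -has_predC => /hasP [i]; rewrite mem_iota add0n /= => hi hb.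
exists i; split => //; move: hb; rewrite /bad negb_or -!leqNgt => /andP [h1 h2].
by rewrite h1 h2.
Qed.

Lemma mod_add2 b c N : b < N -> c < N -> (b + c) %% N = if b + c < N then b + c else b + c - N.
Proof.
move=> hb hc; case: ifP => h; first by rewrite modn_small.
have -> : b + c = (b + c - N) + N by lia.
by rewrite modnDr modn_small; lia.
Qed.

Lemma notadj A B N M c : B < N -> c < N -> A = (B + c) %% N -> M <= c <= N - M -> 0 < M ->
  A != B /\ M <= minn (maxn A B - minn A B) (N - (maxn A B - minn A B)).
Proof.
move=> hB hc ->; rewrite mod_add2 //; case: ifP => h /andP [h1 h2] hM; split; try apply/eqP; lia.
Qed.

Lemma lower r m : 3 <= r ->
  F r m.+1 <= alpha (@strong_pow _ (@circ_adj (F r m.+1) (F r m)) m.+1).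
Proof.
move=> hr.
set N := F r m.+1; set M := F r m.
have HN : 0 < N by apply: F_pos; lia.
have HM : 0 < M by apply: F_pos; lia.
pose a (k : 'I_N) : {ffun 'I_m.+1 -> 'I_N} := [ffun i : 'I_m.+1 => Ordinal (ltn_pmod (k * r ^ i) HN)].
have ainj : injective a.
  move=> k l /(congr1 (fun f : {ffun 'I_m.+1 -> 'I_N} => val (f ord0))).
  rewrite !ffunE /= expn0 !muln1 !modn_small // => h; exact: val_inj.
apply: (@leq_trans #|[set a k | k : 'I_N]|); first by rewrite card_imset // card_ord.
apply: alpha_lb; apply/indepP => x y /imsetP [k _ ->] /imsetP [l _ ->].
rewrite /strong_pow; case: (eqVneq (a k) (a l)) => //= hne.
have hkl : val k != val l by apply: contraNneq hne => /val_inj ->.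
rewrite negb_forall; apply/existsP.
have key : forall k l : 'I_N, val l < val k ->
    exists i : 'I_m.+1, (val (a k i) != val (a l i)) &&
      (M <= minn (maxn (a k i) (a l i) - minn (a k i) (a l i))
              (N - (maxn (a k i) (a l i) - minn (a k i) (a l i)))).
  move=> k0 l0 hlt.
  have hj : 0 < k0 - l0 by rewrite subn_gt0.
  have hjN : k0 - l0 < N by apply: leq_ltn_trans (leq_subr _ _) (ltn_ord k0).
  have [i [hi hc]] := exists_good hr hj hjN.
  exists (Ordinal hi); rewrite !ffunE /=.
  have hB := ltn_pmod (l0 * r ^ i) HN.
  have hc' := ltn_pmod ((k0 - l0) * r ^ i) HN.
  have hA : (k0 * r ^ i) %% N = ((l0 * r ^ i) %% N + ((k0 - l0) * r ^ i) %% N) %% N.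
    rewrite modnDm -mulnDl; congr (_ %% _); congr (_ * _); lia.
  have [h1 h2] := notadj hB hc' hA hc HM.
  by rewrite h1 h2.
case: (ltngtP k l) => hlt.
- have [i hi] := key l k hlt; exists i.
  move: hi => /andP [h1 h2]; rewrite /circ_adj negb_or; apply/andP; split.
    by rewrite -val_eqE eq_sym.
  by rewrite negb_and -leqNgt [maxn (a k i) _]maxnC [minn (a k i) (a l i)]minnC h2 orbT.
- have [i hi] := key k l hlt; exists i.
  move: hi => /andP [h1 h2]; rewrite /circ_adj negb_or; apply/andP; split.
    by rewrite -val_eqE.
  by rewrite negb_and -leqNgt h2 orbT.
- by exfalso; move/eqP: hkl; apply; exact: hlt.
Qed.

Lemma F_div r n : 2 <= r -> (1 + r ^ n * (r - 2)) %/ (r - 1) = F r n.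
Proof. by move=> hr; rewrite -F_mul // mulKn //; lia. Qed.

Theorem theorem9p1 (r n : nat) :
  3 <= r -> 1 <= n ->
  (exists q d : nat, [/\ 0 < d, 2 * d <= q, q < r * d &
      @alpha _ (@strong_pow _ (@circ_adj q d) n) = (1 + r ^ n * (r - 2)) %/ (r - 1)])
  /\
  (forall q d : nat, 0 < d -> 2 * d <= q -> q < r * d ->
      @alpha _ (@strong_pow _ (@circ_adj q d) n) <= (1 + r ^ n * (r - 2)) %/ (r - 1)).
Proof.
move=> hr hn; rewrite F_div; last by lia.
split; last by move=> q d hd hq hqr; exact: upper_all.
case: n hn => [//|m] _.
have HM := F_pos m (ltnW hr).
exists (F r m.+1), (F r m); split => //=.
- nia.
- nia.
- apply/eqP; rewrite eqn_leq lower // andbT.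
  apply: upper_all => //=; nia.
Qed.
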